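(* A group $H$ belongs to the class $\mathscr{R}$ if and only if $H$ is isomorphic to a subgroup of $G_n$ for some integer $n\geq 0$.
   Context: For a group $A$, $A\wr\mathbf{Z}=(\bigoplus_{i\in\mathbf{Z}}A)\rtimes\mathbf{Z}$ is the restricted wreath product with $\mathbf{Z}$ acting by index shift. A bounded direct sum is a countable direct sum of groups with a uniform upper bound on their derived lengths. $\mathscr{R}$ is the smallest non-empty class of groups closed under $A\mapsto A\wr\mathbf{Z}$, bounded direct sums, and taking subgroups. Define $G_0$ to be the trivial group and, for $n\geq 1$, $G_n=\bigoplus_{i\in\mathbf{Z}}(G_{n-1}\wr\mathbf{Z})$. *)

(* Defs.v *)
From Stdlib Require Import ZArith List Lia Classical FunctionalExtensionality ProofIrrelevance.
Set Implicit Arguments.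

Record Group : Type := MkGroup {
  gcar :> Type;
  gmul : gcar -> gcar -> gcar;
  ginv : gcar -> gcar;
  gone : gcar;
  gmulA : forall x y z, gmul x (gmul y z) = gmul (gmul x y) z;
  gmul1 : forall x, gmul gone x = x;
  gmulg1 : forall x, gmul x gone = x;
  gmulV : forall x, gmul (ginv x) x = gone;
  gmulgV : forall x, gmul x (ginv x) = gone }.
Arguments gmul {g}.
Arguments ginv {g}.

Lemma ginv1 (G : Group) : ginv (gone G) = gone G.
Proof. rewrite <- (gmul1 G (ginv (gone G))). apply gmulgV. Qed.

(** Homomorphisms; "H is isomorphic to a subgroup of G" = H embeds in G. *)
Definition is_hom {G H : Group} (f : G -> H) : Prop :=
  forall x y, f (gmul x y) = gmul (f x) (f y).
Definition embeds (H G : Group) : Prop :=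
  exists f : H -> G, is_hom f /\ (forall x y, f x = f y -> x = y).

Inductive gen {G : Group} (P : G -> Prop) : G -> Prop :=
| gen_base x : P x -> gen P x
| gen_one : gen P (gone G)
| gen_mul x y : gen P x -> gen P y -> gen P (gmul x y)
| gen_inv x : gen P x -> gen P (ginv x).

Definition commg {G : Group} (a b : G) : G := gmul (gmul (ginv a) (ginv b)) (gmul a b).

Fixpoint derived (G : Group) (k : nat) : G -> Prop :=
  match k with
  | 0 => fun _ => True
  | S k' => gen (fun x => exists a b, derived G k' a /\ derived G k' b /\ x = commg a b)
  end.

Definition derived_length_le (G : Group) (d : nat) : Prop :=
  forall x, derived G d x -> x = gone G.

Section DSum.
Variables (I : Type) (A : I -> Group).

Definition fin_supp (f : forall i, A i) : Prop :=
  exists s : list I, forall i, f i <> gone (A i) -> In i s.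

Definition dcar := { f : forall i, A i | fin_supp f }.

Lemma dext (x y : dcar) : (forall i, proj1_sig x i = proj1_sig y i) -> x = y.
Proof.
  destruct x as [f hf], y as [g hg]; simpl; intro E.
  assert (f = g) by (apply functional_extensionality_dep; exact E). subst g.
  f_equal. apply proof_irrelevance.
Qed.

Definition dmul (x y : dcar) : dcar.
Proof.
  refine (exist _ (fun i => gmul (proj1_sig x i) (proj1_sig y i)) _).
  destruct x as [f [s hs]], y as [g [t ht]]; simpl. exists (s ++ t).
  intros i H. apply in_or_app.
  destruct (classic (f i = gone (A i))) as [E|E].
  - right. apply ht. intro E'. apply H. rewrite E, E'. apply gmul1.
  - left. apply hs, E.
Defined.

Definition dinv (x : dcar) : dcar.
Proof.
  refine (exist _ (fun i => ginv (proj1_sig x i)) _).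
  destruct x as [f [s hs]]; simpl. exists s.
  intros i H. apply hs. intro E. apply H. rewrite E. apply ginv1.
Defined.

Definition done : dcar.
Proof.
  refine (exist _ (fun i => gone (A i)) _). exists nil. intros i H. now apply H.
Defined.

Lemma dmulE x y i : proj1_sig (dmul x y) i = gmul (proj1_sig x i) (proj1_sig y i).
Proof. reflexivity. Qed.
Lemma dinvE x i : proj1_sig (dinv x) i = ginv (proj1_sig x i).
Proof. reflexivity. Qed.
Lemma doneE i : proj1_sig done i = gone (A i).
Proof. reflexivity. Qed.

Definition dsum : Group.
Proof.
  refine (@MkGroup dcar dmul dinv done _ _ _ _ _); intros;
    apply dext; intro i; rewrite ?dmulE, ?dinvE, ?doneE, ?dmulE.
  - apply gmulA.
  - apply gmul1.
  - apply gmulg1.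
  - apply gmulV.
  - apply gmulgV.
Defined.
End DSum.

(** * Restricted wreath product  A wr Z = (⊕_{i∈Z} A) ⋊ Z, Z acting by shift *)
Section Wreath.
Variable A : Group.
Let D := dcar (fun _ : Z => A).

Definition zshift (m : Z) (x : D) : D.
Proof.
  refine (exist _ (fun i => proj1_sig x (i - m)%Z) _).
  destruct x as [f [s hs]]; simpl. exists (map (fun j => (j + m)%Z) s).
  intros i H. replace i with ((i - m) + m)%Z by lia. apply (in_map (fun j => (j + m)%Z)). apply hs, H.
Defined.

Lemma zshiftE m x i : proj1_sig (zshift m x) i = proj1_sig x (i - m)%Z.
Proof. reflexivity. Qed.

Definition wmul (x y : D * Z) : D * Z :=
  (dmul (fst x) (zshift (snd x) (fst y)), (snd x + snd y)%Z).
Definition winv (x : D * Z) : D * Z :=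
  (zshift (- snd x) (dinv (fst x)), (- snd x)%Z).
Definition wone : D * Z := (done (fun _ : Z => A), 0%Z).

Definition wreath : Group.
Proof.
  refine (@MkGroup (D * Z)%type wmul winv wone _ _ _ _ _).
  - intros [f m] [g n] [h p]; unfold wmul; simpl. f_equal; [|lia].
    apply dext; intro i. rewrite !dmulE, !zshiftE, !dmulE, !zshiftE.
    replace (i - m - n)%Z with (i - (m + n))%Z by lia. apply gmulA.
  - intros [f m]; unfold wmul, wone; simpl. f_equal.
    apply dext; intro i. rewrite dmulE, zshiftE, doneE, Z.sub_0_r. apply gmul1.
  - intros [f m]; unfold wmul, wone; simpl. f_equal; [|lia].
    apply dext; intro i. rewrite dmulE, zshiftE, doneE. apply gmulg1.
  - intros [f m]; unfold wmul, winv, wone; simpl. f_equal; [|lia].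
    apply dext; intro i. rewrite dmulE, !zshiftE, dinvE, doneE. apply gmulV.
  - intros [f m]; unfold wmul, winv, wone; simpl. f_equal; [|lia].
    apply dext; intro i. rewrite dmulE, !zshiftE, dinvE, doneE.
    replace (i - m - - m)%Z with i by lia. apply gmulgV.
Defined.
End Wreath.

Definition trivial_group : Group.
Proof.
  refine (@MkGroup unit (fun _ _ => tt) (fun _ => tt) tt _ _ _ _ _);
    intros; repeat match goal with u : unit |- _ => destruct u end; reflexivity.
Defined.

Fixpoint Gn (n : nat) : Group :=
  match n with
  | 0 => trivial_group
  | S k => dsum (fun _ : Z => wreath (Gn k))
  end.

(** * The class R: smallest non-empty class closed under A |-> A wr Z,
      bounded direct sums, and subgroups *)
Definition countable (I : Type) : Prop :=
  exists g : I -> nat, forall i j, g i = g j -> i = j.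

Definition nonempty_class (C : Group -> Prop) : Prop := exists G, C G.
Definition closed_wreath (C : Group -> Prop) : Prop :=
  forall A, C A -> C (wreath A).
Definition closed_bdsum (C : Group -> Prop) : Prop :=
  forall (I : Type) (A : I -> Group), countable I ->
    (exists d, forall i, derived_length_le (A i) d) ->
    (forall i, C (A i)) -> C (dsum A).
Definition closed_sub (C : Group -> Prop) : Prop :=
  forall G H : Group, embeds H G -> C G -> C H.

Definition in_R (H : Group) : Prop :=
  forall C : Group -> Prop, nonempty_class C -> closed_wreath C ->
    closed_bdsum C -> closed_sub C -> C H.

(* Main.v *)
Require Import Defs.
From Stdlib Require Import ZArith List Lia Classical FunctionalExtensionality ProofIrrelevance ClassicalEpsilon Cantor.
Import ListNotations.
Set Implicit Arguments.
Unset Strict Implicit.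

Section GroupLemmas.
Variable G : Group.
Implicit Types x y z : G.

Lemma mul_cancel_l x y z : gmul x y = gmul x z -> y = z.
Proof.
  intro E. rewrite <- (gmul1 G y), <- (gmul1 G z), <- (gmulV G x), <- !gmulA, E. reflexivity.
Qed.

Lemma mul_cancel_r x y z : gmul y x = gmul z x -> y = z.
Proof.
  intro E. rewrite <- (gmulg1 G y), <- (gmulg1 G z), <- (gmulgV G x), !gmulA, E. reflexivity.
Qed.

Lemma inv_unique x y : gmul x y = gone G -> y = ginv x.
Proof. intro E. apply (mul_cancel_l (x:=x)). rewrite E, gmulgV. reflexivity. Qed.

Lemma inv_inv x : ginv (ginv x) = x.
Proof. symmetry. apply inv_unique. apply gmulV. Qed.

Lemma inv_mul x y : ginv (gmul x y) = gmul (ginv y) (ginv x).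
Proof.
  symmetry. apply inv_unique.
  rewrite gmulA, <- (gmulA G x y), gmulgV, gmulg1, gmulgV. reflexivity.
Qed.

Lemma one_unique x y : gmul x y = x -> y = gone G.
Proof. intro E. apply (mul_cancel_l (x:=x)). rewrite gmulg1. exact E. Qed.

Lemma inv_eq_one x : ginv x = gone G -> x = gone G.
Proof. intro E. rewrite <- (inv_inv x), E. apply ginv1. Qed.

Lemma conj_eq_one a x : gmul (gmul (ginv a) x) a = gone G <-> x = gone G.
Proof.
  split; intro E.
  - apply (mul_cancel_l (x:=ginv a)). apply (mul_cancel_r (x:=a)). rewrite E, gmulg1, gmulV. reflexivity.
  - subst. rewrite gmulg1. apply gmulV.
Qed.

End GroupLemmas.

Section Hom.
Variables (G K : Group) (f : G -> K).
Hypothesis hf : is_hom f.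

Lemma hom_one : f (gone G) = gone K.
Proof.
  apply (one_unique (x:=f (gone G))). rewrite <- hf, gmul1. reflexivity.
Qed.

Lemma hom_inv x : f (ginv x) = ginv (f x).
Proof. apply inv_unique. rewrite <- hf, gmulgV. apply hom_one. Qed.

Lemma hom_commg a b : f (commg a b) = commg (f a) (f b).
Proof. unfold commg. rewrite !hf, !hom_inv. reflexivity. Qed.

Lemma hom_derived k x : derived G k x -> derived K k (f x).
Proof.
  revert x; induction k as [|k IH]; intros x D; simpl in *; [exact I|].
  induction D as [x [a [b [Ha [Hb ->]]]]| |x y _ IHx _ IHy|x _ IHx].
  - apply gen_base. exists (f a), (f b). split; [apply IH, Ha|]. split; [apply IH, Hb|].
    apply hom_commg.
  - rewrite hom_one. apply gen_one.
  - rewrite hf. apply gen_mul; assumption.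
  - rewrite hom_inv. apply gen_inv; assumption.
Qed.
End Hom.

Lemma hom_comp (G K L : Group) (f : G -> K) (g : K -> L) :
  is_hom f -> is_hom g -> is_hom (fun x => g (f x)).
Proof. intros hf hg x y. rewrite hf, hg. reflexivity. Qed.

Lemma embeds_trans A B C : embeds A B -> embeds B C -> embeds A C.
Proof.
  intros [f [hf jf]] [g [hg jg]]. exists (fun x => g (f x)). split.
  - apply hom_comp; assumption.
  - intros x y E. apply jf, jg, E.
Qed.

Lemma embeds_refl A : embeds A A.
Proof. exists (fun x => x). split; [intros x y; reflexivity| auto]. Qed.

Lemma gen_mono (G : Group) (P Q : G -> Prop) : (forall x, P x -> Q x) -> forall x, gen P x -> gen Q x.
Proof.
  intros PQ x D. induction D.
  - apply gen_base, PQ; assumption.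
  - apply gen_one.
  - apply gen_mul; assumption.
  - apply gen_inv; assumption.
Qed.

Lemma derived_S (G : Group) k x : derived G (S k) x -> derived G k x.
Proof.
  revert x; induction k as [|k IH]; intros x D; [exact I|].
  simpl in D |- *. revert D. apply gen_mono.
  intros y [a [b [Ha [Hb E]]]]. exists a, b. split; [apply IH, Ha|]. split; [apply IH, Hb|exact E].
Qed.

Lemma derived_le (G : Group) k m x : k <= m -> derived G m x -> derived G k x.
Proof.
  induction 1; auto. intro D. apply IHle, derived_S, D.
Qed.

Lemma dl_mono G d d' : d <= d' -> derived_length_le G d -> derived_length_le G d'.
Proof. intros L H x D. apply H. eapply derived_le; eauto. Qed.

Lemma dl_embeds H G d : embeds H G -> derived_length_le G d -> derived_length_le H d.
Proof.
  intros [f [hf jf]] DG x Dx. apply jf. rewrite (hom_one hf). apply DG.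
  apply (hom_derived hf), Dx.
Qed.

Definition is_trivial (G : Group) := forall x : G, x = gone G.

Lemma trivial_embeds H G : is_trivial H -> embeds H G.
Proof.
  intro T. exists (fun _ => gone G). split.
  - intros x y. rewrite gmul1. reflexivity.
  - intros x y _. rewrite (T x), (T y). reflexivity.
Qed.

Lemma dl0_trivial G : derived_length_le G 0 -> is_trivial G.
Proof. intros D x. apply D. exact I. Qed.

Lemma embeds_trivial_trivial H : embeds H trivial_group -> is_trivial H.
Proof.
  intros [f [hf jf]] x. apply jf. destruct (f x), (f (gone H)). reflexivity.
Qed.

Section Sub.
Variables (G : Group) (P : G -> Prop).
Hypotheses (P1 : P (gone G)) (PM : forall x y, P x -> P y -> P (gmul x y))
           (PV : forall x, P x -> P (ginv x)).

Definition subcar := { x : G | P x }.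
Lemma sub_ext (a b : subcar) : proj1_sig a = proj1_sig b -> a = b.
Proof.
  destruct a as [a ha], b as [b hb]; simpl; intro E; subst. f_equal. apply proof_irrelevance.
Qed.
Definition smul (a b : subcar) : subcar :=
  exist _ (gmul (proj1_sig a) (proj1_sig b)) (PM (proj2_sig a) (proj2_sig b)).
Definition sinv (a : subcar) : subcar := exist _ (ginv (proj1_sig a)) (PV (proj2_sig a)).
Definition sone : subcar := exist _ (gone G) P1.
Definition subgroup : Group.
Proof.
  refine (@MkGroup subcar smul sinv sone _ _ _ _ _); intros; apply sub_ext; simpl.
  - apply gmulA.
  - apply gmul1.
  - apply gmulg1.
  - apply gmulV.
  - apply gmulgV.
Defined.

Lemma sub_incl : embeds subgroup G.
Proof.
  exists (fun a : subgroup => proj1_sig a). split.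
  - intros a b. reflexivity.
  - intros a b E. apply sub_ext, E.
Qed.
End Sub.
Section Img.
Variables (G K : Group) (f : G -> K) (hf : is_hom f).
Definition imP (y : K) := exists x, f x = y.
Lemma imP1 : imP (gone K). Proof. exists (gone G). apply hom_one, hf. Qed.
Lemma imPM y z : imP y -> imP z -> imP (gmul y z).
Proof. intros [a <-] [b <-]. exists (gmul a b). apply hf. Qed.
Lemma imPV y : imP y -> imP (ginv y).
Proof. intros [a <-]. exists (ginv a). apply hom_inv, hf. Qed.
Definition img : Group := subgroup imP1 imPM imPV.

Lemma img_lift k (y : img) : derived img k y -> exists x, derived G k x /\ f x = proj1_sig y.
Proof.
  revert y; induction k as [|k IH]; intros y D.
  - destruct (proj2_sig y) as [x E]. exists x. split; [exact I|exact E].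
  - simpl in D. induction D as [y [a [b [Ha [Hb ->]]]]| |y z _ IHy _ IHz|y _ IHy].
    + destruct (IH a Ha) as [xa [Da Ea]], (IH b Hb) as [xb [Db Eb]].
      exists (commg xa xb). split.
      * simpl. apply gen_base. exists xa, xb. auto.
      * rewrite (hom_commg hf), Ea, Eb. reflexivity.
    + exists (gone G). split; [apply gen_one| apply hom_one, hf].
    + destruct IHy as [a [Da Ea]], IHz as [b [Db Eb]]. exists (gmul a b). split.
      * apply gen_mul; assumption.
      * rewrite hf, Ea, Eb. reflexivity.
    + destruct IHy as [a [Da Ea]]. exists (ginv a). split.
      * apply gen_inv; assumption.
      * rewrite (hom_inv hf), Ea. reflexivity.
Qed.

Lemma img_dl d : derived_length_le G d -> derived_length_le img d.
Proof.
  intros DG y Dy. destruct (img_lift Dy) as [x [Dx E]]. apply sub_ext. simpl.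
  rewrite <- E, (DG x Dx). apply hom_one, hf.
Qed.

Lemma img_incl : embeds img K.
Proof. apply sub_incl. Qed.
End Img.

Lemma proj_hom I (A : I -> Group) (i : I) : is_hom (fun x : dsum A => proj1_sig x i).
Proof. intros x y. reflexivity. Qed.

Lemma dl_dsum I (A : I -> Group) d :
  (forall i, derived_length_le (A i) d) -> derived_length_le (dsum A) d.
Proof.
  intros DA x Dx. apply dext. intro i. simpl.
  apply DA. apply (hom_derived (proj_hom (A:=A) i) Dx).
Qed.

Section Single.
Variables (I : Type) (W : Group) (i0 : I).
Definition single (a : W) : dcar (fun _ : I => W).
Proof.
  refine (exist _ (fun i => if excluded_middle_informative (i = i0) then a else gone W) _).
  exists [i0]. intros i H. destruct (excluded_middle_informative (i = i0)); [left; auto|now elim H].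
Defined.
Lemma single_embeds : embeds W (dsum (fun _ : I => W)).
Proof.
  exists single. split.
  - intros a b. apply dext. intro i. simpl.
    destruct (excluded_middle_informative (i = i0)); [reflexivity| rewrite gmul1; reflexivity].
  - intros a b E. assert (E' := f_equal (fun x => proj1_sig x i0) E). simpl in E'.
    destruct (excluded_middle_informative (i0 = i0)); [exact E'| now elim n].
Qed.
End Single.

Lemma wreath_in_Gn m : embeds (wreath (Gn m)) (Gn (S m)).
Proof. apply (single_embeds _ 0%Z). Qed.

Section DsumMap.
Variables (I : Type) (A B : I -> Group).
Lemma dsum_map : (forall i, embeds (A i) (B i)) -> embeds (dsum A) (dsum B).
Proof.
  intro H.
  set (F := fun i => proj1_sig (constructive_indefinite_description _ (H i))).
  assert (HF : forall i, is_hom (F i) /\ (forall x y, F i x = F i y -> x = y)).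
  { intro i. unfold F. destruct (constructive_indefinite_description _ (H i)); simpl; auto. }
  assert (Fone : forall i, F i (gone (A i)) = gone (B i)).
  { intro i. apply hom_one, (proj1 (HF i)). }
  unshelve eexists.
  - intro x. refine (exist _ (fun i => F i (proj1_sig x i)) _).
    destruct x as [g [s hs]]. exists s. intros i Hi. apply hs. intro E. apply Hi. simpl. rewrite E. apply Fone.
  - split.
    + intros x y. apply dext. intro i. simpl. apply (proj1 (HF i)).
    + intros x y E. apply dext. intro i. apply (proj2 (HF i)).
      exact (f_equal (fun z => proj1_sig z i) E).
Qed.
End DsumMap.

Section Reindex.
Variables (J K : Type) (W : Group) (c : J -> K).
Hypothesis cinj : forall a b, c a = c b -> a = b.
Definition rdx (x : dcar (fun _ : J => W)) (k : K) : W :=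
  match excluded_middle_informative (exists j, c j = k) with
  | left p => proj1_sig x (proj1_sig (constructive_indefinite_description _ p))
  | right _ => gone W end.
Lemma rdx_c x j : rdx x (c j) = proj1_sig x j.
Proof.
  unfold rdx. destruct (excluded_middle_informative _) as [p|n].
  - destruct (constructive_indefinite_description _ p) as [j' E]. simpl. apply cinj in E. subst. reflexivity.
  - elim n. eauto.
Qed.
Lemma reindex : embeds (dsum (fun _ : J => W)) (dsum (fun _ : K => W)).
Proof.
  unshelve eexists.
  - intro x. refine (exist _ (rdx x) _).
    destruct x as [g [s hs]]. exists (map c s). intros k Hk. unfold rdx in Hk.
    destruct (excluded_middle_informative _) as [p|n]; [|now elim Hk].
    destruct (constructive_indefinite_description _ p) as [j' E]. simpl in Hk. subst.
    apply in_map, hs, Hk.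
  - split.
    + intros x y. apply dext. intro k. simpl. unfold rdx.
      destruct (excluded_middle_informative _) as [p|n]; [reflexivity|]. symmetry. apply gmul1.
    + intros x y E. apply dext. intro j. rewrite <- !rdx_c.
      exact (f_equal (fun z => proj1_sig z (c j)) E).
Qed.
End Reindex.

Section Flatten.
Variables (I : Type) (W : Group).
Lemma flatten : embeds (dsum (fun _ : I => dsum (fun _ : Z => W))) (dsum (fun _ : (I * Z)%type => W)).
Proof.
  unshelve eexists.
  - intro x. refine (exist _ (fun p => proj1_sig (proj1_sig x (fst p)) (snd p)) _).
    destruct x as [g [s hs]]. simpl.
    assert (L : forall s' : list I, exists L, forall i z, In i s' -> proj1_sig (g i) z <> gone W -> In (i, z) L).
    { induction s' as [|i0 s' [L HL]].
      - exists nil. intros i z [].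
      - destruct (proj2_sig (g i0)) as [t ht]. exists (map (fun z => (i0, z)) t ++ L).
        intros i z [<-|Hi] Hz; apply in_or_app.
        + left. apply in_map, ht, Hz.
        + right. apply HL; assumption. }
    destruct (L s) as [LL HL]. exists LL. intros [i z] Hz. simpl in Hz. apply HL; [|exact Hz].
    apply hs. intro E. apply Hz. rewrite E. reflexivity.
  - split.
    + intros x y. apply dext. intros [i z]. reflexivity.
    + intros x y E. apply dext. intro i. apply dext. intro z.
      exact (f_equal (fun w => proj1_sig w (i, z)) E).
Qed.
End Flatten.

Definition zenc (z : Z) : nat := Z.to_nat (if (0 <=? z)%Z then 2 * z else - 2 * z - 1)%Z.
Lemma zenc_inj a b : zenc a = zenc b -> a = b.
Proof.
  unfold zenc. destruct (Z.leb_spec 0 a), (Z.leb_spec 0 b); lia.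
Qed.

Lemma countable_Z : countable Z.
Proof. exists zenc. apply zenc_inj. Qed.

Lemma dsum_into_Gn I m : countable I -> embeds (dsum (fun _ : I => Gn (S m))) (Gn (S m)).
Proof.
  intros [g gi]. eapply embeds_trans; [apply flatten|].
  apply (@reindex _ _ _ (fun p : (I * Z)%type => Z.of_nat (Cantor.to_nat (g (fst p), zenc (snd p))))).
  intros [i z] [i' z'] E. cbn [fst snd] in E. apply Nat2Z.inj in E.
  assert (E' := f_equal Cantor.of_nat E). rewrite !Cantor.cancel_of_to in E'.
  injection E' as E1 E2. apply gi in E1. apply zenc_inj in E2. subst. reflexivity.
Qed.
Section WreathLemmas.
Variable A : Group.
Let D := dsum (fun _ : Z => A).

Lemma zshift0 (g : dcar (fun _ : Z => A)) : zshift 0 g = g.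
Proof. apply dext. intro i. rewrite zshiftE, Z.sub_0_r. reflexivity. Qed.

Lemma wmul0 (a b : wreath A) : snd a = 0%Z -> gmul a b = (dmul (fst a) (fst b), snd b).
Proof.
  destruct a as [f m], b as [g n]. simpl. intros ->. unfold wmul. simpl. rewrite zshift0. reflexivity.
Qed.

Lemma winv0 (a : wreath A) : snd a = 0%Z -> ginv a = (dinv (fst a), 0%Z).
Proof.
  destruct a as [f m]. simpl. intros ->. unfold winv. simpl. rewrite zshift0. reflexivity.
Qed.

Lemma wcommg0 (a b : wreath A) : snd a = 0%Z -> snd b = 0%Z ->
  commg a b = ((commg (fst a : D) (fst b : D) : D), 0%Z).
Proof.
  destruct a as [f m], b as [g n]. simpl. intros -> ->. unfold commg. simpl. unfold wmul, winv. simpl.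
  f_equal. apply dext. intro i. simpl. rewrite !Z.sub_0_r. reflexivity.
Qed.

Lemma wreath_derived k (x : wreath A) :
  derived (wreath A) (S k) x -> snd x = 0%Z /\ derived D k (fst x).
Proof.
  revert x; induction k as [|k IH]; intros x Dx.
  - split; [|exact I]. simpl in Dx.
    induction Dx as [x [a [b [_ [_ ->]]]]| |x y _ IHx _ IHy|x _ IHx]; simpl.
    + destruct a as [f m], b as [g n]. simpl. lia.
    + reflexivity.
    + destruct x, y; simpl in *. lia.
    + destruct x; simpl in *. lia.
  - change (gen (fun x => exists a b, derived (wreath A) (S k) a /\ derived (wreath A) (S k) b /\ x = commg a b) x) in Dx.
    induction Dx as [x [a [b [Ha [Hb ->]]]]| |x y _ IHx _ IHy|x _ IHx].
    + destruct (IH a Ha) as [a0 Da], (IH b Hb) as [b0 Db].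
      rewrite (wcommg0 a0 b0). simpl. split; [reflexivity|]. apply gen_base. exists (fst a), (fst b). split; [exact Da|]. split; [exact Db|].
      reflexivity.
    + split; [reflexivity| exact (@gen_one D _)].
    + destruct IHx as [x0 Dx], IHy as [y0 Dy]. rewrite wmul0 by exact x0. simpl. split; [exact y0|].
      exact (gen_mul Dx Dy).
    + destruct IHx as [x0 Dx]. rewrite winv0 by exact x0. simpl. split; [reflexivity|].
      exact (gen_inv Dx).
Qed.

Lemma dl_wreath d : derived_length_le A d -> derived_length_le (wreath A) (S d).
Proof.
  intros DA x Dx. destruct (wreath_derived Dx) as [E Df].
  assert (F : fst x = done (fun _ : Z => A)).
  { apply (dl_dsum (fun _ => DA) Df). }
  destruct x as [f m]. simpl in *. subst. reflexivity.
Qed.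
End WreathLemmas.

Lemma wreath_map A B : embeds A B -> embeds (wreath A) (wreath B).
Proof.
  intros [f [hf jf]].
  assert (f1 : f (gone A) = gone B) by apply (hom_one hf).
  set (dm := fun g : dcar (fun _ : Z => A) =>
    exist (fin_supp (fun _ : Z => B)) (fun i => f (proj1_sig g i))
     (match proj2_sig g with ex_intro _ s hs => ex_intro _ s (fun i Hi => hs i (fun E => Hi (eq_ind_r (fun z => f z = gone B) f1 E))) end)).
  exists (fun x : wreath A => (dm (fst x), snd x) : wreath B). split.
  - intros [g m] [h n]. simpl. unfold wmul. simpl. f_equal. apply dext. intro i. simpl. apply hf.
  - intros [g m] [h n] E. injection E as E1 E2. subst. f_equal. apply dext. intro i. apply jf.
    exact (f_equal (fun z => z i) E1).
Qed.

Lemma dl_Gn n : derived_length_le (Gn n) n.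
Proof.
  induction n as [|n IH].
  - intros x _. destruct x. reflexivity.
  - simpl. apply dl_dsum. intro i. apply dl_wreath, IH.
Qed.

Lemma Gn_in_class (C : Group -> Prop) : nonempty_class C -> closed_wreath C ->
  closed_bdsum C -> closed_sub C -> forall n, C (Gn n).
Proof.
  intros [G0 HG0] Cw Cd Cs n. induction n as [|n IH].
  - apply (Cs G0); [apply trivial_embeds; intro x; destruct x; reflexivity| exact HG0].
  - simpl. apply Cd.
    + apply countable_Z.
    + exists (S n). intro i. apply dl_wreath, dl_Gn.
    + intro i. apply Cw, IH.
Qed.
Section Pow.
Variables (G : Group) (t : G).
Fixpoint npow (n : nat) : G := match n with O => gone G | S n => gmul (npow n) t end.
Definition zpow (i : Z) : G :=
  if (0 <=? i)%Z then npow (Z.to_nat i) else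
    (fix np (n : nat) : G := match n with O => gone G | S n => gmul (np n) (ginv t) end) (Z.to_nat (- i)).

Lemma zpow0 : zpow 0 = gone G. Proof. reflexivity. Qed.

Lemma zpow_succ i : zpow (i + 1) = gmul (zpow i) t.
Proof.
  unfold zpow. destruct (Z.leb_spec 0 i), (Z.leb_spec 0 (i+1)); try lia.
  - replace (Z.to_nat (i+1)) with (S (Z.to_nat i)) by lia. reflexivity.
  - assert (i = -1)%Z by lia. subst. simpl. rewrite gmul1. symmetry. apply gmulV.
  - replace (Z.to_nat (-i)) with (S (Z.to_nat (-(i+1)))) by lia. simpl.
    rewrite <- gmulA, gmulV, gmulg1. reflexivity.
Qed.

Lemma zpow_pred i : zpow (i - 1) = gmul (zpow i) (ginv t).
Proof.
  replace (zpow i) with (zpow ((i - 1) + 1)) by (f_equal; lia).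
  rewrite zpow_succ, <- gmulA, gmulgV, gmulg1. reflexivity.
Qed.

Lemma zpow_add a b : zpow (a + b) = gmul (zpow a) (zpow b).
Proof.
  revert a. induction b using Z.peano_ind; intro a.
  - rewrite Z.add_0_r, zpow0, gmulg1. reflexivity.
  - replace (a + Z.succ b)%Z with ((a + b) + 1)%Z by lia. replace (Z.succ b) with (b + 1)%Z by lia.
    rewrite !zpow_succ, IHb, gmulA. reflexivity.
  - replace (a + Z.pred b)%Z with ((a + b) - 1)%Z by lia. replace (Z.pred b) with (b - 1)%Z by lia.
    rewrite !zpow_pred, IHb, gmulA. reflexivity.
Qed.

Lemma zpow1 : zpow 1 = t.
Proof. apply gmul1. Qed.

Lemma zpow_opp a : zpow (- a) = ginv (zpow a).
Proof. apply inv_unique. rewrite <- zpow_add, Z.add_opp_diag_r. reflexivity. Qed.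
End Pow.

Section AddHom.
Variables (G : Group) (phi : G -> Z).
Hypothesis phiadd : forall x y, phi (gmul x y) = (phi x + phi y)%Z.
Lemma phi1 : phi (gone G) = 0%Z.
Proof. assert (E := phiadd (gone G) (gone G)). rewrite gmul1 in E. lia. Qed.
Lemma phiV x : phi (ginv x) = (- phi x)%Z.
Proof. assert (E := phiadd (ginv x) x). rewrite gmulV, phi1 in E. lia. Qed.
Lemma phi_zpow t i : phi (zpow t i) = (i * phi t)%Z.
Proof.
  induction i using Z.peano_ind.
  - rewrite zpow0. apply phi1.
  - replace (Z.succ i) with (i + 1)%Z by lia. rewrite zpow_succ, phiadd, IHi. lia.
  - replace (Z.pred i) with (i - 1)%Z by lia. rewrite zpow_pred, phiadd, IHi, phiV. lia.
Qed.
Lemma phi_derived1 x : derived G 1 x -> phi x = 0%Z.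
Proof.
  simpl. induction 1 as [x [a [b [_ [_ ->]]]]| |x y _ IHx _ IHy|x _ IHx].
  - unfold commg. rewrite !phiadd, !phiV. lia.
  - apply phi1.
  - rewrite phiadd. lia.
  - rewrite phiV. lia.
Qed.
End AddHom.

Lemma fresh_Z (s : list Z) : exists N, ~ In N s.
Proof.
  exists (1 + fold_right (fun x acc => Z.abs x + acc) 0 s)%Z.
  assert (forall x, In x s -> (Z.abs x <= fold_right (fun x acc => Z.abs x + acc) 0 s)%Z).
  { induction s as [|a s IH]; simpl; [tauto|].
    assert (0 <= fold_right (fun x acc => Z.abs x + acc) 0 s)%Z.
    { clear. induction s; simpl; lia. }
    intros x [<-|Hx]; [lia|]. specialize (IH x Hx). lia. }
  intro Hin. apply H in Hin. lia.
Qed.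
Section Aux.
Variable G : Group.
Implicit Types a b c d x y h p q r : G.
Lemma conj_mul_aux a b x y : gmul b a = gone G ->
  gmul (gmul a (gmul x y)) b = gmul (gmul (gmul a x) b) (gmul (gmul a y) b).
Proof.
  intro E. rewrite (gmulA G (gmul (gmul a x) b) (gmul a y) b), (gmulA G (gmul (gmul a x) b) a y).
  rewrite <- (gmulA G (gmul a x) b a), E, gmulg1, (gmulA G a x y). reflexivity.
Qed.
Lemma assoc_aux a c x d b : gmul (gmul a (gmul (gmul c x) d)) b = gmul (gmul (gmul a c) x) (gmul d b).
Proof. rewrite !gmulA. reflexivity. Qed.
Lemma kap_aux h p q h' r : gmul p q = gone G ->
  gmul (gmul h p) (gmul (gmul q (gmul h' r)) p) = gmul (gmul h h') (gmul r p).
Proof. intro E. rewrite !gmulA. rewrite <- (gmulA G h p q), E, gmulg1. reflexivity. Qed.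
End Aux.
Section KK.
Variables (H B : Group) (phi : H -> Z) (t : H) (rho : H -> B).
Hypothesis phiadd : forall x y, phi (gmul x y) = (phi x + phi y)%Z.
Hypothesis phit : phi t = 1%Z.
Definition ker x := phi x = 0%Z.
Hypothesis rhomul : forall x y, ker x -> ker y -> rho (gmul x y) = gmul (rho x) (rho y).
Definition cj (i : Z) (x : H) : H := gmul (gmul (zpow t (- i)) x) (zpow t i).
Hypothesis rhosupp : forall x, ker x -> exists s, forall i, rho (cj i x) <> gone B -> In i s.
Hypothesis rhoinj : forall x, ker x -> (forall i, rho (cj i x) = gone B) -> x = gone H.

Lemma ker1 : ker (gone H). Proof. apply phi1, phiadd. Qed.
Lemma kerM x y : ker x -> ker y -> ker (gmul x y).
Proof. unfold ker. intros. rewrite phiadd. lia. Qed.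
Lemma kerV x : ker x -> ker (ginv x).
Proof. unfold ker. intros. rewrite (phiV phiadd). lia. Qed.
Lemma ker_cj i x : ker x -> ker (cj i x).
Proof. unfold ker, cj. intros. rewrite !phiadd, !(phi_zpow phiadd), phit. lia. Qed.

Lemma rho1 : rho (gone H) = gone B.
Proof. apply (one_unique (x:=rho (gone H))). rewrite <- rhomul by apply ker1. rewrite gmul1. reflexivity. Qed.
Lemma rhoV x : ker x -> rho (ginv x) = ginv (rho x).
Proof. intro k. apply inv_unique. rewrite <- rhomul by (auto using kerV). rewrite gmulgV. apply rho1. Qed.
Lemma rho_commg a b : ker a -> ker b -> rho (commg a b) = commg (rho a) (rho b).
Proof.
  intros ka kb. unfold commg. rewrite !rhomul, !rhoV; auto using kerM, kerV.
Qed.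

Lemma cjM i x y : cj i (gmul x y) = gmul (cj i x) (cj i y).
Proof.
  unfold cj. apply conj_mul_aux. rewrite <- zpow_add, Z.add_opp_diag_r. reflexivity.
Qed.
Lemma cjV i x : cj i (ginv x) = ginv (cj i x).
Proof. apply inv_unique. rewrite <- cjM, gmulgV. unfold cj. rewrite gmulg1, <- zpow_add, Z.add_opp_diag_l. reflexivity. Qed.
Lemma cjcj i j x : cj i (cj j x) = cj (i + j) x.
Proof.
  unfold cj. rewrite assoc_aux, <- !zpow_add. f_equal; [f_equal; f_equal; lia| f_equal; lia].
Qed.

Definition bP (y : B) := exists x, ker x /\ rho x = y.
Lemma bP1 : bP (gone B). Proof. exists (gone H). split; [apply ker1|apply rho1]. Qed.
Lemma bPM y z : bP y -> bP z -> bP (gmul y z).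
Proof. intros [a [ka <-]] [b [kb <-]]. exists (gmul a b). split; [apply kerM; auto| auto]. Qed.
Lemma bPV y : bP y -> bP (ginv y).
Proof. intros [a [ka <-]]. exists (ginv a). split; [apply kerV; auto| apply rhoV; auto]. Qed.
Definition Bsub : Group := subgroup bP1 bPM bPV.

Definition kap (h : H) : H := gmul h (zpow t (- phi h)).
Lemma ker_kap h : ker (kap h).
Proof. unfold ker, kap. rewrite phiadd, (phi_zpow phiadd), phit. lia. Qed.

Lemma kap_mul h h' : kap (gmul h h') = gmul (kap h) (cj (- phi h) (kap h')).
Proof.
  unfold kap, cj. rewrite Z.opp_involutive, phiadd, kap_aux.
  - rewrite <- zpow_add. f_equal. f_equal. lia.
  - rewrite <- zpow_add, Z.add_opp_diag_l. reflexivity.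
Qed.

Definition Fh (h : H) : dcar (fun _ : Z => Bsub).
Proof.
  refine (exist _ (fun i => exist bP (rho (cj i (kap h))) (ex_intro _ (cj i (kap h)) (conj (ker_cj i (ker_kap h)) eq_refl))) _).
  destruct (rhosupp (ker_kap h)) as [s hs]. exists s. intros i Hi. apply hs. intro E. apply Hi.
  apply sub_ext. exact E.
Defined.

Definition Phi (h : H) : wreath Bsub := (Fh h, phi h).

Lemma Phi_hom : is_hom Phi.
Proof.
  intros h h'. unfold Phi. simpl. unfold wmul. simpl. f_equal; [|apply phiadd].
  apply dext. intro i. simpl. apply sub_ext. simpl.
  rewrite kap_mul, cjM, cjcj, rhomul.
  - replace (i + - phi h)%Z with (i - phi h)%Z by lia. reflexivity.
  - apply ker_cj, ker_kap.
  - apply ker_cj, ker_kap.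
Qed.

Lemma Phi_inj h h' : Phi h = Phi h' -> h = h'.
Proof.
  unfold Phi. intro E. injection E as E1 E2.
  assert (Hi : forall i, rho (cj i (kap h)) = rho (cj i (kap h'))).
  { intro i. exact (f_equal (fun z => proj1_sig (z i)) E1). }
  assert (K : gmul (kap h) (ginv (kap h')) = gone H).
  { apply rhoinj. { apply kerM; [apply ker_kap| apply kerV, ker_kap]. }
    intro i. rewrite cjM, cjV, rhomul, rhoV, Hi, gmulgV; auto using ker_cj, ker_kap, kerV. }
  assert (K' : kap h = kap h').
  { apply (mul_cancel_r (x:=ginv (kap h'))). rewrite K, gmulgV. reflexivity. }
  unfold kap in K'. rewrite E2 in K'. apply mul_cancel_r in K'. exact K'.
Qed.

Lemma KK_embeds : embeds H (wreath Bsub).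
Proof. exists Phi. split; [apply Phi_hom| apply Phi_inj]. Qed.

Lemma Bsub_lift j (y : Bsub) : derived Bsub j y -> exists x, derived H (S j) x /\ rho x = proj1_sig y.
Proof.
  revert y; induction j as [|j IH]; intros y Dy.
  - destruct (proj2_sig y) as [x0 [k0 E0]].
    destruct (rhosupp (kerV k0)) as [s hs]. destruct (fresh_Z s) as [N HN].
    assert (R : rho (cj N (ginv x0)) = gone B).
    { destruct (classic (rho (cj N (ginv x0)) = gone B)) as [e|ne]; [exact e|]. elim HN. apply hs, ne. }
    exists (commg (ginv x0) (zpow t N)). split.
    + simpl. apply gen_base. exists (ginv x0), (zpow t N). auto.
    + assert (C : commg (ginv x0) (zpow t N) = gmul x0 (cj N (ginv x0))).
      { unfold commg, cj. rewrite inv_inv, <- zpow_opp, !gmulA. reflexivity. }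
      rewrite C, rhomul, R, gmulg1; auto. apply ker_cj, kerV, k0.
  - simpl in Dy. induction Dy as [y [a [b [Ha [Hb ->]]]]| |y z _ IHy _ IHz|y _ IHy].
    + destruct (IH a Ha) as [xa [Da Ea]], (IH b Hb) as [xb [Db Eb]].
      exists (commg xa xb). split.
      * change (gen (fun x => exists a b, derived H (S j) a /\ derived H (S j) b /\ x = commg a b) (commg xa xb)).
        apply gen_base. exists xa, xb. auto.
      * assert (ka : ker xa) by (apply (phi_derived1 phiadd); eapply derived_le; [|eassumption]; lia).
        assert (kb : ker xb) by (apply (phi_derived1 phiadd); eapply derived_le; [|eassumption]; lia).
        rewrite (rho_commg ka kb), Ea, Eb. reflexivity.
    + exists (gone H). split; [apply gen_one| apply rho1].
    + destruct IHy as [a [Da Ea]], IHz as [b [Db Eb]]. exists (gmul a b). split.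
      * apply gen_mul; assumption.
      * assert (ka : ker a) by (apply (phi_derived1 phiadd); eapply derived_le; [|eassumption]; lia).
        assert (kb : ker b) by (apply (phi_derived1 phiadd); eapply derived_le; [|eassumption]; lia).
        rewrite (rhomul ka kb), Ea, Eb. reflexivity.
    + destruct IHy as [a [Da Ea]]. exists (ginv a). split.
      * apply gen_inv; assumption.
      * assert (ka : ker a) by (apply (phi_derived1 phiadd); eapply derived_le; [|eassumption]; lia).
        rewrite (rhoV ka), Ea. reflexivity.
Qed.

Lemma Bsub_dl d : derived_length_le H (S d) -> derived_length_le Bsub d.
Proof.
  intros DH y Dy. destruct (Bsub_lift Dy) as [x [Dx E]]. apply sub_ext. simpl.
  rewrite <- E, (DH x Dx). apply rho1.
Qed.
End KK.
Section WConj.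
Variable A : Group.
Lemma wconj1 (w y : wreath A) j : snd y = 0%Z ->
  proj1_sig (fst (gmul (gmul (ginv w) y) w)) j =
  gmul (gmul (ginv (proj1_sig (fst w) (j + snd w)%Z)) (proj1_sig (fst y) (j + snd w)%Z)) (proj1_sig (fst w) (j + snd w)%Z).
Proof.
  destruct w as [f s], y as [g n]. simpl. intros ->. simpl.
  replace (j - - s)%Z with (j + s)%Z by lia. replace (j - (- s + 0))%Z with (j + s)%Z by lia. reflexivity.
Qed.
Lemma wconj2 (w y : wreath A) j : snd y = 0%Z ->
  proj1_sig (fst (gmul (gmul w y) (ginv w))) j =
  gmul (gmul (proj1_sig (fst w) j) (proj1_sig (fst y) (j - snd w)%Z)) (ginv (proj1_sig (fst w) j)).
Proof.
  destruct w as [f s], y as [g n]. simpl. intros ->. simpl.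
  replace (j - (s + 0) - - s)%Z with j by lia. reflexivity.
Qed.
End WConj.

Lemma conj_eq_one' (G : Group) (a x : G) : gmul (gmul a x) (ginv a) = gone G <-> x = gone G.
Proof. rewrite <- (inv_inv a) at 1. apply conj_eq_one. Qed.

Definition Q (G : Group) := forall H d, embeds H G -> derived_length_le H d -> embeds H (Gn d).

Lemma Q_trivial : Q trivial_group.
Proof. intros H d E _. apply trivial_embeds, embeds_trivial_trivial, E. Qed.

Lemma Q_dsum I (A : I -> Group) : countable I -> (forall i, Q (A i)) -> Q (dsum A).
Proof.
  intros cI QA H d [e [he je]] DH. destruct d as [|d'].
  { apply trivial_embeds, dl0_trivial, DH. }
  set (pi := fun i (h : H) => proj1_sig (e h) i).
  assert (hpi : forall i, is_hom (pi i)).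
  { intros i x y. unfold pi. rewrite he. reflexivity. }
  set (S := fun i => img (hpi i)).
  assert (ES : embeds H (dsum S)).
  { unshelve eexists.
    - intro h. refine (exist _ (fun i => exist _ (pi i h) (ex_intro _ h eq_refl)) _).
      destruct (proj2_sig (e h)) as [s hs]. exists s. intros i Hi. apply hs. intro E. apply Hi.
      apply sub_ext. exact E.
    - split.
      + intros x y. apply dext. intro i. apply sub_ext. simpl. apply hpi.
      + intros x y E. apply je. apply dext. intro i.
        exact (f_equal (fun z => proj1_sig (proj1_sig z i)) E). }
  eapply embeds_trans; [exact ES|]. eapply embeds_trans; [|apply (dsum_into_Gn d' cI)].
  apply dsum_map. intro i. apply (QA i).
  - apply img_incl.
  - apply img_dl, DH.
Qed.
Lemma nat_min (P : nat -> Prop) n : P n -> exists m, P m /\ forall m', P m' -> m <= m'.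
Proof.
  induction n as [n IH] using (well_founded_induction Wf_nat.lt_wf). intro Pn.
  destruct (classic (exists m', P m' /\ m' < n)) as [[m' [Pm' L]]|N].
  - apply (IH m' L Pm').
  - exists n. split; [exact Pn|]. intros m' Pm'. destruct (Nat.le_gt_cases n m'); auto.
    elim N. eauto.
Qed.

Section WreathSub.
Variables (A H : Group) (e : H -> wreath A).
Hypotheses (he : is_hom e) (je : forall x y, e x = e y -> x = y).
Let D := dsum (fun _ : Z => A).
Definition psi (h : H) : Z := snd (e h).
Lemma psiadd x y : psi (gmul x y) = (psi x + psi y)%Z.
Proof. unfold psi. rewrite he. reflexivity. Qed.

Variables (k : Z) (t : H).
Hypotheses (kpos : (0 < k)%Z) (psit : psi t = k)
  (kmin : forall h, (0 < psi h < k)%Z -> False).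

Lemma psi_div h : psi h = (k * (psi h / k))%Z.
Proof.
  assert (M := Z.mod_pos_bound (psi h) k kpos).
  destruct (Z.eq_dec (psi h mod k) 0) as [E|NE].
  - assert (DM := Z.div_mod (psi h) k ltac:(lia)). lia.
  - exfalso. apply (kmin (h := gmul h (zpow t (- (psi h / k))))).
    rewrite psiadd, (phi_zpow psiadd), psit.
    assert (DM := Z.div_mod (psi h) k ltac:(lia)). lia.
Qed.

Definition phk (h : H) : Z := (psi h / k)%Z.
Lemma phkadd x y : phk (gmul x y) = (phk x + phk y)%Z.
Proof.
  unfold phk. assert (Ex := psi_div x). assert (Ey := psi_div y). assert (Exy := psi_div (gmul x y)).
  rewrite psiadd in Exy. apply (Z.mul_reg_l _ _ k); [lia|]. rewrite psiadd. lia.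
Qed.
Lemma phkt : phk t = 1%Z.
Proof. unfold phk. rewrite psit. apply Z.div_same. lia. Qed.
Lemma ker_psi x : ker phk x <-> psi x = 0%Z.
Proof. unfold ker, phk. assert (E := psi_div x). split; intro F; [rewrite F in E; lia| rewrite F; reflexivity]. Qed.

Definition rhov (h : H) : D.
Proof.
  refine (exist _ (fun j => if andb (0 <=? j)%Z (j <? k)%Z then proj1_sig (fst (e h)) j else gone A) _).
  destruct (proj2_sig (fst (e h))) as [s hs]. exists s. intros j Hj. apply hs. intro E. apply Hj.
  destruct (andb _ _); [exact E|reflexivity].
Defined.

Lemma fst_mul0 x y : psi x = 0%Z -> fst (e (gmul x y)) = dmul (fst (e x)) (fst (e y)).
Proof. intro E. rewrite he, wmul0 by exact E. reflexivity. Qed.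

Lemma rhomul' x y : ker phk x -> ker phk y -> rhov (gmul x y) = gmul (rhov x) (rhov y).
Proof.
  intros kx ky. apply ker_psi in kx. apply dext. intro j. simpl. rewrite fst_mul0 by exact kx. simpl.
  destruct (andb _ _); [reflexivity| symmetry; apply gmul1].
Qed.

Lemma zpowm1 : zpow t (-1) = ginv t.
Proof. transitivity (ginv (zpow t 1)); [exact (zpow_opp t 1)| rewrite zpow1; reflexivity]. Qed.
Lemma cj1 y : cj t 1 y = gmul (gmul (ginv t) y) t.
Proof. unfold cj. change (Z.opp 1) with (Zneg 1%positive). rewrite zpowm1, zpow1. reflexivity. Qed.
Lemma cjm1 y : cj t (-1) y = gmul (gmul t y) (ginv t).
Proof. unfold cj. change (Z.opp (Zneg 1%positive)) with 1%Z. rewrite zpowm1, zpow1. reflexivity. Qed.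


Lemma psi_cj i x : psi (cj t i x) = psi x.
Proof. unfold cj. rewrite !psiadd, !(phi_zpow psiadd). lia. Qed.

Lemma coordL x : psi x = 0%Z -> forall i j,
  proj1_sig (fst (e (cj t i x))) j = gone A <-> proj1_sig (fst (e x)) (j + i * k)%Z = gone A.
Proof.
  intros kx i. induction i using Z.peano_ind; intro j.
  - unfold cj. rewrite zpow0, gmul1, gmulg1, Z.add_0_r. reflexivity.
  - replace (Z.succ i) with (1 + i)%Z by lia. rewrite <- cjcj, cj1, !he, (hom_inv he), wconj1.
    + rewrite conj_eq_one. fold (psi t). rewrite psit, IHi. replace (j + k + i * k)%Z with (j + (1 + i) * k)%Z by lia.
      reflexivity.
    + fold (psi (cj t i x)). rewrite psi_cj. exact kx.
  - replace (Z.pred i) with (-1 + i)%Z by lia. rewrite <- cjcj, cjm1, !he, (hom_inv he), wconj2.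
    + rewrite conj_eq_one'. fold (psi t). rewrite psit, IHi. replace (j - k + i * k)%Z with (j + (-1 + i) * k)%Z by lia.
      reflexivity.
    + fold (psi (cj t i x)). rewrite psi_cj. exact kx.
Qed.

Lemma rhosupp' x : ker phk x -> exists s, forall i, rhov (cj t i x) <> gone D -> In i s.
Proof.
  intro kx. apply ker_psi in kx. destruct (proj2_sig (fst (e x))) as [s0 hs0].
  exists (map (fun m => (m / k)%Z) s0). intros i Hi.
  assert (Ej : exists j, (0 <= j < k)%Z /\ proj1_sig (fst (e (cj t i x))) j <> gone A).
  { apply NNPP. intro N. apply Hi. apply dext. intro j. simpl.
    destruct (andb _ _) eqn:B; [|reflexivity].
    apply andb_prop in B. destruct B as [B1 B2]. apply Z.leb_le in B1. apply Z.ltb_lt in B2.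
    apply NNPP. intro N'. apply N. exists j. split; [lia|exact N']. }
  destruct Ej as [j [Bj Nj]]. apply in_map_iff. exists (j + i * k)%Z. split.
  - rewrite Z.add_comm, Z.div_add_l by lia. rewrite Z.div_small by lia. lia.
  - apply hs0. intro E. apply Nj. apply (coordL kx). exact E.
Qed.

Lemma rhoinj' x : ker phk x -> (forall i, rhov (cj t i x) = gone D) -> x = gone H.
Proof.
  intros kx Hi. apply ker_psi in kx. apply je. rewrite (hom_one he).
  assert (Hf : fst (e x) = done (fun _ : Z => A)).
  { apply dext. intro m. simpl.
    assert (DM := Z.div_mod m k ltac:(lia)). assert (MB := Z.mod_pos_bound m k kpos).
    assert (C := f_equal (fun z : D => proj1_sig z (m mod k)%Z) (Hi (m / k)%Z)). simpl in C.
    replace (andb _ _) with true in C by (symmetry; apply andb_true_intro; split; [apply Z.leb_le|apply Z.ltb_lt]; lia).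
    apply (coordL kx) in C. rewrite <- C. f_equal. lia. }
  rewrite (surjective_pairing (e x)), Hf. unfold psi in kx. rewrite kx. reflexivity.
Qed.

Lemma WS_embeds d' : Q D -> derived_length_le H (S d') -> embeds H (Gn (S d')).
Proof.
  intros QD DH.
  pose (KKe := KK_embeds (phi:=phk) (t:=t) (rho:=rhov) phkadd phkt rhomul' rhosupp' rhoinj').
  eapply embeds_trans; [exact KKe|]. eapply embeds_trans; [apply wreath_map|apply wreath_in_Gn].
  apply QD.
  - apply sub_incl.
  - exact (@Bsub_dl _ _ phk t rhov phkadd phkt rhomul' rhosupp' d' DH).
Qed.
End WreathSub.

Lemma Q_wreath A : Q (dsum (fun _ : Z => A)) -> Q (wreath A).
Proof.
  intros QD H d [e [he je]] DH. destruct d as [|d'].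
  { apply trivial_embeds, dl0_trivial, DH. }
  destruct (classic (forall h, snd (e h) = 0%Z)) as [Z0|NZ].
  - apply (QD H (S d')); [|exact DH].
    exists (fun h => fst (e h)). split.
    + intros x y. rewrite he, wmul0 by apply Z0. reflexivity.
    + intros x y E. apply je. rewrite (surjective_pairing (e x)), (surjective_pairing (e y)), E, !Z0. reflexivity.
  - apply not_all_ex_not in NZ. destruct NZ as [h0 N0].
    set (P := fun n => 0 < n /\ exists h, psi e h = Z.of_nat n).
    assert (P0 : P (Z.to_nat (Z.abs (psi e h0)))).
    { split; [unfold psi; lia|].
      destruct (Z.le_gt_cases 0 (psi e h0)).
      - exists h0. lia.
      - exists (ginv h0). rewrite (phiV (psiadd he)). lia. }
    destruct (nat_min P0) as [m [[mpos [t Et]] mmin]].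
    apply (@WS_embeds A H e he je (Z.of_nat m) t); auto; try lia.
    intros h Bh. assert (L : P (Z.to_nat (psi e h))).
    { split; [lia| exists h; lia]. }
    apply mmin in L. lia.
Qed.

Lemma Q_Gn n : Q (Gn n).
Proof.
  induction n as [|n IH].
  - apply Q_trivial.
  - simpl. apply Q_dsum; [apply countable_Z|]. intro i. apply Q_wreath.
    apply Q_dsum; [apply countable_Z|]. intro; exact IH.
Qed.


Theorem theorem3 (H : Group) : in_R H <-> exists n : nat, embeds H (Gn n).
Proof.
  split.
  - intro R. apply (R (fun G => exists n, embeds G (Gn n))).
    + exists (Gn 0). exists 0. apply embeds_refl.
    + intros A [n E]. exists (S n). eapply embeds_trans; [apply (wreath_map E)| apply wreath_in_Gn].
    + intros I A cI [d Dd] CA. exists (S d).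
      eapply embeds_trans; [|apply (dsum_into_Gn d cI)]. apply dsum_map. intro i.
      destruct (CA i) as [n E]. apply (Q_Gn E). apply (dl_mono (d:=d)); [lia|apply Dd].
    + intros G K E [n E']. exists n. eapply embeds_trans; eauto.
  - intros [n E] C ne cw cd cs. apply (cs (Gn n)); [exact E|]. apply Gn_in_class; auto.
Qed.
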